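(* Let $n=p_1^{\alpha_1}p_2^{\alpha_2}p_3^{\alpha_3}$, where $\alpha_1,\alpha_2,\alpha_3$ are positive integers and $p_1<p_2<p_3$ are primes. Let $\{i,j,k\}=\{1,2,3\}$ with $i<j$. If $(p_i+p_j)\,\phi(p_jp_k)-p_ip_jp_k>0$, then $\deg(p_i^{\beta_i}p_j)>\deg(p_j)$ in $\mathcal{P}(C_n)$ for every $1\leq\beta_i\leq\alpha_i$.
   Context: For a finite group $G$, the power graph $\mathcal{P}(G)$ is the simple undirected graph with vertex set $G$ in which two distinct vertices are adjacent if one is an integral power of the other. $C_n$ denotes the cyclic group of order $n$, identified with $\mathbb{Z}_n=\{0,1,\ldots,n-1\}$, so a positive divisor $d$ of $n$ is regarded as the element $d\bmod n\in\mathbb{Z}_n$. $\deg(a)$ is the degree of vertex $a$ in $\mathcal{P}(C_n)$ and $\phi$ is Euler's totient function. *)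

(* Defs.v *)
From mathcomp Require Import all_boot all_order all_algebra all_fingroup.
Set Implicit Arguments. Unset Strict Implicit. Unset Printing Implicit Defensive.

(* Power graph of a finite group: distinct x, y adjacent iff one is an
   integral power of the other, i.e. x \in <[y]> or y \in <[x]>. *)
Definition pg_adj (gT : finGroupType) (x y : gT) : bool :=
  (x != y) && ((x \in <[y]>%g) || (y \in <[x]>%g)).

Definition pg_deg (gT : finGroupType) (x : gT) : nat :=
  #|[set y : gT | pg_adj x y]|.

(* The cyclic group C_n as the additive group 'Z_n (used for n >= 2);
   a natural number d is regarded as d mod n. *)
Definition Cn_elt (n d : nat) : 'Z_n := inZp d.

(* Main.v *)
Require Import Defs.
From mathcomp Require Import all_boot all_order all_algebra all_fingroup.
From mathcomp Require Import zify ring lra.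
Set Implicit Arguments. Unset Strict Implicit. Unset Printing Implicit Defensive.

Lemma card_dvd (M d : nat) : 0 < M -> d %| M -> #|[set u : 'I_M | d %| u]| = M %/ d.
Proof.
move=> Mpos hd; have dpos : 0 < d := dvdn_gt0 Mpos hd.
case/dvdnP: hd => t ht; subst M; rewrite mulnK //.
have lt (k : 'I_t) : k * d < t * d by rewrite ltn_pmul2r.
pose f (k : 'I_t) : 'I_(t * d) := Ordinal (lt k).
have finj : injective f.
  by move=> k1 k2 /(congr1 val) /= /eqP; rewrite eqn_pmul2r // => /eqP; apply: val_inj.
transitivity #|f @: [set: 'I_t]|; last by rewrite (card_imset _ finj) cardsT card_ord.
apply: eq_card => u; rewrite inE; apply/idP/imsetP.
  case/dvdnP => k hk.
  have hk' : k < t by rewrite -(ltn_pmul2r dpos) -hk.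
  by exists (Ordinal hk'); rewrite ?inE //; apply: val_inj.
by case=> k _ ->; apply: dvdn_mull.
Qed.

Lemma card_andN (T : finType) (p q : pred T) :
  #|[set u | p u && ~~ q u]| = #|[set u | p u]| - #|[set u | p u && q u]|.
Proof.
rewrite -(cardsID [set u | q u] [set u | p u]).
have -> : [set u | p u] :&: [set u | q u] = [set u | p u && q u].
  by apply/setP => u; rewrite !inE.
have -> : [set u | p u] :\: [set u | q u] = [set u | p u && ~~ q u].
  by apply/setP => u; rewrite !inE andbC.
by rewrite addKn.
Qed.

Lemma card_N (T : finType) (q : pred T) :
  #|[set u | ~~ q u]| = #|T| - #|[set u | q u]|.
Proof.
rewrite -(cardsC [set u | q u]) addKn.
by apply: eq_card => u; rewrite !inE.
Qed.

Section PP.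
Variables (P a s : nat).
Hypothesis (Pp : prime P) (sa : s <= a).

Let Pgt1 : 1 < P := prime_gt1 Pp.
Let Apos : 0 < P ^ a. Proof. by rewrite expn_gt0 prime_gt0. Qed.

Lemma gcd_pp (u : nat) :
  (gcdn u (P ^ a) %| P ^ s) = ~~ ((P ^ s.+1 %| u) && (s < a)).
Proof.
have /(dvdn_pfactor _ _ Pp) [m ma hm] := dvdn_gcdr u (P ^ a).
rewrite hm dvdn_Pexp2l //.
have -> : (P ^ s.+1 %| u) && (s < a) = (P ^ s.+1 %| gcdn u (P ^ a)).
  by rewrite dvdn_gcd dvdn_Pexp2l.
by rewrite hm dvdn_Pexp2l // -ltnNge.
Qed.

Lemma card_hi : #|[set u : 'I_(P ^ a) | (P ^ s.+1 %| u) && (s < a)]| = P ^ a %/ P ^ s.+1.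
Proof.
case: (ltnP s a) => hsa.
  under eq_finset do rewrite andbT.
  by rewrite card_dvd // dvdn_exp2l.
under eq_finset do rewrite andbF.
rewrite cards0 divn_small // ltn_exp2l //; lia.
Qed.

Lemma card_PA : #|[set u : 'I_(P ^ a) | gcdn u (P ^ a) %| P ^ s]| = P ^ a - P ^ a %/ P ^ s.+1.
Proof. under eq_finset do rewrite gcd_pp. by rewrite card_N card_ord card_hi. Qed.

Lemma card_PAB : #|[set u : 'I_(P ^ a) | (P ^ s %| u) && (gcdn u (P ^ a) %| P ^ s)]|
   = P ^ a %/ P ^ s - P ^ a %/ P ^ s.+1.
Proof.
under eq_finset do rewrite gcd_pp.
rewrite card_andN card_dvd ?dvdn_exp2l //; congr (_ - _).
rewrite -card_hi; apply: eq_card => u; rewrite !inE.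
case h : (P ^ s.+1 %| u); rewrite ?andbF //=.
suff -> : P ^ s %| u by [].
by apply: dvdn_trans h; rewrite dvdn_exp2l.
Qed.
End PP.
Lemma mem_cycle_Zp (m : nat) (x z : 'I_m.+1) :
  (z \in <[x]>%g) = (gcdn x m.+1 %| z).
Proof.
apply/cycleP/idP.
  case=> k ->; rewrite Zp_expg /= /inZp /=.
  have h1 : gcdn x m.+1 %| x * k by apply: dvdn_mulr; apply: dvdn_gcdl.
  by rewrite /dvdn modn_dvdm ?dvdn_gcdr //.
case: (posnP x) => [x0|xpos].
  rewrite x0 gcd0n => hd; exists 0; apply: val_inj; rewrite Zp_expg /= x0 mod0n.
  have := ltn_ord z; move: hd; case: (z : nat) => // z' /dvdn_leq; lia.
case: (egcdnP m.+1 xpos) => km kn hk _ /dvdnP [t ht].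
exists (km * t); apply: val_inj; rewrite Zp_expg /= mulnA (mulnC x) hk ht.
by rewrite mulnDl mulnAC modnMDl [_ * t]mulnC -ht modn_small.
Qed.

Lemma gcdnM_coprime (z B C : nat) : coprime B C -> gcdn z (B * C) = gcdn z B * gcdn z C.
Proof.
move=> co; apply/eqP; rewrite eqn_dvd; apply/andP; split.
  rewrite muln_gcdl !muln_gcdr !dvdn_gcd.
  have hz : gcdn z (B * C) %| z := dvdn_gcdl _ _.
  by apply/andP; split; apply/andP; split;
    [exact: dvdn_mulr hz | exact: dvdn_mulr hz | exact: dvdn_mull hz | exact: dvdn_gcdr].
have co12 : coprime (gcdn z B) (gcdn z C).
  by apply: (coprime_dvdl (dvdn_gcdr _ _)); apply: (coprime_dvdr (dvdn_gcdr _ _)).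
rewrite dvdn_gcd Gauss_dvd // !dvdn_gcdl /=.
by apply: dvdn_mul; apply: dvdn_gcdr.
Qed.

Lemma dvdn_modA (d z M : nat) : d %| M -> (d %| z %% M) = (d %| z).
Proof. by move=> h; rewrite /dvdn modn_dvdm. Qed.

Lemma coprime_pp (P Q a c : nat) : prime P -> prime Q -> P != Q -> 0 < a -> 0 < c ->
  coprime (P ^ a) (Q ^ c).
Proof.
move=> pP pQ hne ha hc; rewrite coprime_pexpl // coprime_pexpr // prime_coprime //.
by rewrite dvdn_prime2.
Qed.

Section Arith.
Import Order.TTheory GRing.Theory Num.Theory.
Local Open Scope ring_scope.
Lemma final_arith (P Q R y w1 w2 q1 q2 r d0 db : int) :
  2 <= P -> P < Q -> 2 <= R -> 1 <= y -> 1 <= r ->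
  P*Q*R < (P+Q)*(Q-1)*(R-1) ->
  (w1 = P*w2 /\ 1 <= w2) \/ (w1 = 1 /\ w2 = 0) ->
  (q1 = Q*q2 /\ 1 <= q2) \/ (q1 = 1 /\ q2 = 0) ->
  d0 + 1 + ((P*y*w1) - (y*w1))*(q1 - q2)*((R*r) - r) = (P*y*w1)*q1*(R*r) + ((P*y*w1) - (y*w1))*((Q*q1) - q2)*((R*r) - r) ->
  db + 1 + (w1 - w2)*(q1 - q2)*((R*r) - r) = w1*q1*(R*r) + ((P*y*w1) - w2)*((Q*q1) - q2)*((R*r) - r) ->
  d0 < db.
Proof.
move=> hP hPQ hR hy hr hK hw hq E0 Eb.
have H0 : d0 = (P*y*w1)*q1*(R*r) + ((P*y*w1) - (y*w1))*((Q*q1) - q2)*((R*r) - r) - ((P*y*w1) - (y*w1))*(q1 - q2)*((R*r) - r) - 1 by rewrite -E0; ring.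
have Hb : db = w1*q1*(R*r) + ((P*y*w1) - w2)*((Q*q1) - q2)*((R*r) - r) - (w1 - w2)*(q1 - q2)*((R*r) - r) - 1 by rewrite -Eb; ring.
have hL : 0 < (R-1)*(Q-1) - P by nia.
have hK' : 0 < (P+Q)*(Q-1)*(R-1) - P*Q*R by lia.
have hY : 0 < P*y - 1 by nia.
rewrite -subr_gt0.
case: hw H0 Hb => [[-> hw2] | [-> ->]]; case: hq => [[-> hq2] | [-> ->]] => H0 Hb.
- have -> : db - d0 = w2*q2*r*(P*y-1)*((P+Q)*(Q-1)*(R-1) - P*Q*R) by rewrite Hb H0; ring.
  by repeat apply: mulr_gt0; lia.
- have -> : db - d0 = w2*r*(P*y-1)*((R-1)*(Q-1) - P) by rewrite Hb H0; ring.
  by repeat apply: mulr_gt0; lia.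
- have -> : db - d0 = q2*r*((R-1)*(Q-1)*(P*y - 1 + y*Q) - Q*R*(P*y-1)) by rewrite Hb H0; ring.
  have e : P * ((R-1)*(Q-1)*(P*y - 1 + y*Q) - Q*R*(P*y-1)) =
     (P*y-1)*((P+Q)*(Q-1)*(R-1) - P*Q*R) + (R-1)*(Q-1)*Q by ring.
  have h1 : 0 < (P*y-1)*((P+Q)*(Q-1)*(R-1) - P*Q*R) by apply: mulr_gt0.
  have h2 : 0 < (R-1)*(Q-1)*Q by repeat apply: mulr_gt0; lia.
  have : 0 < P * ((R-1)*(Q-1)*(P*y - 1 + y*Q) - Q*R*(P*y-1)) by rewrite e; lia.
  rewrite pmulr_rgt0; last by lia.
  by move=> h3; repeat apply: mulr_gt0; lia.
- have -> : db - d0 = r*(y*((R-1)*(Q-1) - P) + 1) by rewrite Hb H0; ring.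
  have h1 : 0 < y*((R-1)*(Q-1) - P) by apply: mulr_gt0; lia.
  by apply: mulr_gt0; lia.
Qed.

End Arith.

Lemma divcase (P a s : nat) : prime P -> s <= a ->
  (P ^ a %/ P ^ s = P * (P ^ a %/ P ^ s.+1) /\ 0 < P ^ a %/ P ^ s.+1) \/
  (P ^ a %/ P ^ s = 1 /\ P ^ a %/ P ^ s.+1 = 0).
Proof.
move=> pP hsa; have P0 : 0 < P := prime_gt0 pP.
case: (ltnP s a) => h.
  left; rewrite -!expnB //.
  have -> : a - s = (a - s.+1).+1 by lia.
  by rewrite expnS expn_gt0 P0.
right; have es : s = a by lia.
subst s; rewrite divnn expn_gt0 P0 divn_small // ltn_exp2l // prime_gt1 //.
Qed.

Section Main.
Variables (P Q R a c f m : nat).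
Hypotheses (pP : prime P) (pQ : prime Q) (pR : prime R).
Hypotheses (nPQ : P != Q) (nPR : P != R) (nQR : Q != R).
Hypotheses (ha : 0 < a) (hc : 0 < c) (hf : 0 < f).
Hypothesis hm : m.+2 = P ^ a * Q ^ c * R ^ f.

Let A := P ^ a.
Let B := Q ^ c.
Let C := R ^ f.
Let Apos : 0 < A. Proof. by rewrite expn_gt0 prime_gt0. Qed.
Let Bpos : 0 < B. Proof. by rewrite expn_gt0 prime_gt0. Qed.
Let Cpos : 0 < C. Proof. by rewrite expn_gt0 prime_gt0. Qed.
Let cAB : coprime A B. Proof. exact: coprime_pp. Qed.
Let cAC : coprime A C. Proof. exact: coprime_pp. Qed.
Let cBC : coprime B C. Proof. exact: coprime_pp. Qed.

Section S.
Variables (s : nat).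
Hypothesis (hs : s <= a).
Let e := P ^ s * Q.

Let e_dvd : e %| A * B.
Proof. by apply: dvdn_mul; [apply: dvdn_exp2l | apply: dvdn_exp; [|apply: dvdnn]]. Qed.

Let e_lt : e < m.+2.
Proof.
rewrite hm; have h1 : e <= A * B by apply: dvdn_leq; [rewrite muln_gt0 Apos Bpos|].
have h2 : 1 < C by rewrite -[1](expn0 R) ltn_exp2l // prime_gt1.
have h3 : 0 < A * B by rewrite muln_gt0 Apos Bpos.
rewrite -/A -/B -/C; nia.
Qed.

Let x : 'I_m.+2 := inZp e.

Let xval : (x : nat) = e.
Proof. by rewrite /= modn_small. Qed.

Definition crt (z : 'I_m.+2) : 'I_A * 'I_B * 'I_C :=
  (Ordinal (ltn_pmod z Apos), Ordinal (ltn_pmod z Bpos), Ordinal (ltn_pmod z Cpos)).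

Let crt_inj : injective crt.
Proof.
move=> z1 z2 [h1 h2 h3]; apply: val_inj => /=.
have : z1 == z2 %[mod A * B * C].
  rewrite chinese_remainder; last by rewrite coprimeMl cAC cBC.
  by rewrite chinese_remainder // h1 h2 h3 !eqxx.
by rewrite -hm !modn_small // => /eqP.
Qed.

Let crt_bij : bijective crt.
Proof.
apply: inj_card_bij crt_inj _.
by rewrite card_prod !card_prod !card_ord hm.
Qed.

Definition S1 : {set 'I_A * 'I_B * 'I_C} :=
  setX (setX [set u : 'I_A | P ^ s %| u] [set v : 'I_B | Q ^ 1 %| v]) setT.
Definition S2 : {set 'I_A * 'I_B * 'I_C} :=
  setX (setX [set u : 'I_A | gcdn u A %| P ^ s] [set v : 'I_B | gcdn v B %| Q ^ 1])
       [set w : 'I_C | gcdn w C %| R ^ 0].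
Definition S3 : {set 'I_A * 'I_B * 'I_C} := S1 :|: S2.

Lemma card_S3 : #|S3| + ((A %/ P ^ s - A %/ P ^ s.+1) * (B %/ Q ^ 1 - B %/ Q ^ 2)) * (C - C %/ R ^ 1) =
  (A %/ P ^ s * (B %/ Q ^ 1)) * C
  + (A - A %/ P ^ s.+1) * (B - B %/ Q ^ 2) * (C - C %/ R ^ 1).
Proof.
have hX : forall (X1 X2 : {set 'I_A}) (Y1 Y2 : {set 'I_B}) (Z2 : {set 'I_C}),
   setX (setX X1 Y1) setT :&: setX (setX X2 Y2) Z2 = setX (setX (X1 :&: X2) (Y1 :&: Y2)) Z2.
  move=> X1 X2 Y1 Y2 Z2; apply/setP => [[[u v] w]]; rewrite !inE /=.
  by case: (u \in X1); case: (u \in X2); case: (v \in Y1); case: (v \in Y2).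
have hI : #|S1 :&: S2| = ((A %/ P ^ s - A %/ P ^ s.+1) * (B %/ Q ^ 1 - B %/ Q ^ 2)) * (C - C %/ R ^ 1).
  rewrite /S1 /S2 hX !cardsX (@card_PA R f 0 pR).
  have -> : [set u : 'I_A | P ^ s %| u] :&: [set u : 'I_A | gcdn u A %| P ^ s] =
     [set u : 'I_A | (P ^ s %| u) && (gcdn u (P ^ a) %| P ^ s)] by apply/setP => u; rewrite !inE.
  have -> : [set v : 'I_B | Q ^ 1 %| v] :&: [set v : 'I_B | gcdn v B %| Q ^ 1] =
     [set v : 'I_B | (Q ^ 1 %| v) && (gcdn v (Q ^ c) %| Q ^ 1)] by apply/setP => u; rewrite !inE.
  by rewrite (@card_PAB P a s pP hs) (@card_PAB Q c 1 pQ hc).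
have hU : #|S1| + #|S2| = (A %/ P ^ s * (B %/ Q ^ 1)) * C
  + (A - A %/ P ^ s.+1) * (B - B %/ Q ^ 2) * (C - C %/ R ^ 1).
  rewrite /S1 /S2 !cardsX cardsT card_ord !card_dvd ?dvdn_exp2l //.
  by rewrite (@card_PA P a s pP) (@card_PA Q c 1 pQ) (@card_PA R f 0 pR).
by rewrite /S3 -hI cardsUI hU.
Qed.

Let QB : Q %| B. Proof. by apply: dvdn_exp; [|apply: dvdnn]. Qed.
Let PsA : P ^ s %| A. Proof. by apply: dvdn_exp2l. Qed.

Let prod_dvd g1 g2 g3 : g1 %| A -> g2 %| B -> g3 %| C ->
  (g1 * g2 * g3 %| P ^ s * Q) = (g1 %| P ^ s) && (g2 %| Q) && (g3 %| 1).
Proof.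
move=> d1 d2 d3; apply/idP/idP.
  move=> h.
  have h1 : g1 %| P ^ s * Q by apply: dvdn_trans h; rewrite -mulnA dvdn_mulr.
  have h2 : g2 %| P ^ s * Q.
    by apply: dvdn_trans h; apply: dvdn_mulr; apply: dvdn_mull.
  have h3 : g3 %| P ^ s * Q by apply: dvdn_trans h; apply: dvdn_mull.
  have c1 : coprime g1 Q by apply: (coprime_dvdl d1); apply: (coprime_dvdr QB).
  have c2 : coprime g2 (P ^ s).
    by apply: (coprime_dvdl d2); apply: (coprime_dvdr PsA); rewrite coprime_sym.
  have c3 : coprime g3 (P ^ s * Q).
    apply: (coprime_dvdl d3); apply: (coprime_dvdr e_dvd).
    by rewrite coprimeMr ![coprime C _]coprime_sym cAC cBC.
  rewrite (Gauss_dvdl _ c1) in h1; rewrite (Gauss_dvdr _ c2) in h2.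
  rewrite -(mul1n (P ^ s * Q)) (Gauss_dvdl _ c3) in h3.
  by rewrite h1 h2 h3.
case/andP => /andP [h1 h2] h3.
by rewrite -(muln1 (P ^ s * Q)); apply: dvdn_mul (dvdn_mul h1 h2) h3.
Qed.

Let predE (z : 'I_m.+2) :
  ((gcdn z m.+2 %| e) || (e %| z)) = (crt z \in S3).
Proof.
rewrite /S3 /S1 /S2 !inE /= !dvdn_modA // !gcdn_modl expn1 expn0 andbT orbC.
have cPQ : coprime (P ^ s) Q by apply: (coprime_dvdl PsA); apply: (coprime_dvdr QB).
rewrite Gauss_dvd //; congr (_ || _).
have hmN (y : nat) : gcdn y m.+2 = gcdn y A * gcdn y B * gcdn y C.
  rewrite hm gcdnM_coprime; last by rewrite coprimeMl cAC cBC.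
  by rewrite gcdnM_coprime.
by rewrite hmN prod_dvd //; apply: dvdn_gcdr.
Qed.

Lemma deg_x : pg_deg x + 1 = #|S3|.
Proof.
have eN : gcdn e m.+2 = e by apply/gcdn_idPl; rewrite hm; apply: dvdn_mulr.
pose Sf := [set z : 'I_m.+2 | (gcdn z m.+2 %| e) || (e %| z)].
have -> : #|S3| = #|Sf|.
  rewrite -(on_card_preimset (onW_bij _ crt_bij)).
  by apply: eq_card => z; rewrite [in RHS]inE predE [in LHS]inE.
rewrite (cardsD1 x Sf) addnC; congr (_ + _).
  by rewrite inE xval dvdnn orbT.
rewrite /pg_deg; apply: eq_card => z; rewrite !inE /pg_adj !mem_cycle_Zp xval eN.
by rewrite eq_sym orbC.
Qed.

End S.

Lemma core b : 1 <= b <= a -> P < Q -> P * Q * R < (P + Q) * (Q.-1 * R.-1) ->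
  pg_deg (inZp Q : 'I_m.+2) < pg_deg (inZp (P ^ b * Q) : 'I_m.+2).
Proof.
case/andP => hb1 hba hPQ hK.
have E0 := deg_x (leq0n a); have Eb := deg_x hba.
have C0 := card_S3 (leq0n a); have Cb := card_S3 hba.
rewrite expn0 mul1n in E0.
rewrite -E0 in C0; rewrite -Eb in Cb; clear E0 Eb.
rewrite expn0 divn1 in C0.
rewrite /A /B /C in C0 Cb.
have P0 : 0 < P := prime_gt0 pP.
have Q0 : 0 < Q := prime_gt0 pQ.
have R0 : 0 < R := prime_gt0 pR.
have hw := divcase pP hba.
have hq := divcase pQ hc.
have hA : P ^ a = P * P ^ b.-1 * (P ^ a %/ P ^ b).
  by rewrite -expnS prednK // mulnC divnK // dvdn_exp2l.
have ht0 : P ^ a %/ P ^ 1 = P ^ b.-1 * (P ^ a %/ P ^ b).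
  by rewrite {1}hA expn1 -mulnA mulKn.
have hB : Q ^ c = Q * (Q ^ c %/ Q ^ 1).
  by rewrite mulnC divnK // dvdn_exp2l.
have hC : R ^ f = R * (R ^ f %/ R ^ 1).
  by rewrite mulnC divnK // dvdn_exp2l.
have hy : 0 < P ^ b.-1 by rewrite expn_gt0 P0.
have hr : 0 < R ^ f %/ R ^ 1 by rewrite divn_gt0 ?expn_gt0 ?R0 // leq_exp2l // prime_gt1.
have l1 : P ^ a %/ P ^ 1 <= P ^ a := leq_div _ _.
have l2 : Q ^ c %/ Q ^ 2 <= Q ^ c %/ Q ^ 1 by rewrite leq_div2l ?expn_gt0 ?Q0 // leq_exp2l // prime_gt1.
have l3 : R ^ f %/ R ^ 1 <= R ^ f := leq_div _ _.
have l4 : Q ^ c %/ Q ^ 2 <= Q ^ c := leq_div _ _.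
have l5 : P ^ a %/ P ^ b.+1 <= P ^ a %/ P ^ b by rewrite leq_div2l ?expn_gt0 ?P0 // leq_exp2l // prime_gt1.
have l6 : P ^ a %/ P ^ b.+1 <= P ^ a := leq_div _ _.
move: C0 Cb hw hq hA ht0 hB hC hy hr l1 l2 l3 l4 l5 l6.
move: (P ^ a) (Q ^ c) (R ^ f) (pg_deg _) (pg_deg _) (P ^ a %/ P ^ 1) (P ^ a %/ P ^ b) (P ^ a %/ P ^ b.+1)
   (Q ^ c %/ Q ^ 1) (Q ^ c %/ Q ^ 2) (R ^ f %/ R ^ 1) (P ^ b.-1).
move=> A0 B0 C1 db d0 t0 w1 w2 q1 q2 r y C0 Cb hw hq hA ht0 hB hC hy hr l1 l2 l3 l4 l5 l6.
have P2 : 1 < P := prime_gt1 pP; have R2 : 1 < R := prime_gt1 pR.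
subst A0 t0 B0 C1.
move/(congr1 Posz): C0; rewrite !PoszD !PoszM -!subzn // !PoszM => C0.
move/(congr1 Posz): Cb; rewrite !PoszD !PoszM -!subzn // !PoszM => Cb.
have hKz : (P%:Z * Q%:Z * R%:Z < (P%:Z + Q%:Z) * (Q%:Z - 1) * (R%:Z - 1))%R.
  move: hK; rewrite -ltz_nat !PoszM PoszD !predn_int // => h.
  by rewrite !GRing.mulrA in h *.
rewrite -ltz_nat; apply: (final_arith _ _ _ _ _ hKz _ _ C0 Cb); try lia.
Qed.

End Main.


Lemma key3 (p a : 'I_3 -> nat)
  (hlt01 : p ord0 < p (inord 1)) (hlt12 : p (inord 1) < p (inord 2))
  (i j k : 'I_3) (hij : (i < j)%N) (hki : k != i) (hkj : k != j) :
  p ord0 ^ a ord0 * p (inord 1) ^ a (inord 1) * p (inord 2) ^ a (inord 2)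
    = p i ^ a i * p j ^ a j * p k ^ a k /\ p i < p j /\ p i != p k /\ p j != p k.
Proof.
have E0 (o : 'I_3) : val o = 0 -> o = ord0 by move=> h; apply: val_inj.
have E1 (o : 'I_3) : val o = 1 -> o = inord 1 by move=> h; apply: val_inj; rewrite /= h inordK.
have E2 (o : 'I_3) : val o = 2 -> o = inord 2 by move=> h; apply: val_inj; rewrite /= h inordK.
move: hij hki hkj.
case: i => [[|[|[|i']]] hi] //; case: j => [[|[|[|j']]] hj] //;
  case: k => [[|[|[|k']]] hk] //= _ _ _.
- rewrite (E0 (Ordinal hi)) // (E1 (Ordinal hj)) // (E2 (Ordinal hk)) //.
  move: hlt01 hlt12; move: (p ord0 ^ a ord0) (p (inord 1) ^ a (inord 1)) (p (inord 2) ^ a (inord 2)).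
  move: (p ord0) (p (inord 1)) (p (inord 2)) => x y z X Y Z h1 h2.
  split; first by []. split. lia. split. apply/eqP. lia. apply/eqP. lia.
- rewrite (E0 (Ordinal hi)) // (E2 (Ordinal hj)) // (E1 (Ordinal hk)) //.
  move: hlt01 hlt12; move: (p ord0 ^ a ord0) (p (inord 1) ^ a (inord 1)) (p (inord 2) ^ a (inord 2)).
  move: (p ord0) (p (inord 1)) (p (inord 2)) => x y z X Y Z h1 h2.
  split; [by rewrite mulnAC | split; [lia | split; apply/eqP; lia]].
- rewrite (E1 (Ordinal hi)) // (E2 (Ordinal hj)) // (E0 (Ordinal hk)) //.
  move: hlt01 hlt12; move: (p ord0 ^ a ord0) (p (inord 1) ^ a (inord 1)) (p (inord 2) ^ a (inord 2)).
  move: (p ord0) (p (inord 1)) (p (inord 2)) => x y z X Y Z h1 h2.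
  split; [by rewrite [RHS]mulnC mulnA | split; [lia | split; apply/eqP; lia]].
Qed.


Unset Implicit Arguments.

Theorem lemma5p2 (p a : 'I_3 -> nat)
  (hp : forall t, prime (p t)) (ha : forall t, 0 < a t)
  (hlt01 : p ord0 < p (inord 1)) (hlt12 : p (inord 1) < p (inord 2))
  (i j k : 'I_3) (hij : (i < j)%N) (hki : k != i) (hkj : k != j)
  (hcond : (0 < ((p i + p j)%:Z * (totient (p j * p k))%:Z
                 - (p i * p j * p k)%:Z))%R) :
  let n := (p ord0 ^ a ord0 * p (inord 1) ^ a (inord 1) * p (inord 2) ^ a (inord 2))%N in
  forall b : nat, (1 <= b <= a i)%N ->
    (pg_deg (Cn_elt n (p j)) < pg_deg (Cn_elt n (p i ^ b * p j)))%N.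
Proof.
move=> n b hb.
have [hn [hPQ [hPR hQR]]] := @key3 p a hlt01 hlt12 i j k hij hki hkj.
have h1n : 1 < n.
  rewrite /n hn.
  have h1 : 1 < p i ^ a i by rewrite -[1](expn0 (p i)) ltn_exp2l ?prime_gt1 ?ha.
  have h2 : 0 < p j ^ a j by rewrite expn_gt0 prime_gt0.
  have h3 : 0 < p k ^ a k by rewrite expn_gt0 prime_gt0.
  nia.
have hm : (Zp_trunc n).+2 = p i ^ a i * p j ^ a j * p k ^ a k by rewrite Zp_cast // /n hn.
have ht : totient (p j * p k) = (p j).-1 * (p k).-1.
  by rewrite totient_coprime ?totient_prime // prime_coprime // dvdn_prime2.
move: hcond; rewrite ht Num.Theory.subr_gt0 -PoszM ltz_nat => hK.
exact: (core (hp i) (hp j) (hp k) (negbT (ltn_eqF hPQ)) hPR hQR (ha i) (ha j) (ha k) hm hb hPQ hK).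
Qed.
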